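(* In a generalised differential Seely category, for every $X\in\mathscr C$ and $A\in\mathcal L$, the chain rule holds in the fibre over $X$: $\partial^X_A;\mathbf p^X_A=(\mathbf c^X_A\otimes_X\mathrm{id}_{(X,A)});(\mathbf p^X_A\otimes_X\partial^X_A);\partial^X_{!A}$.
   Context: Composition is diagrammatic; monoidal categories are strict. Setting: an LNL adjunction $\mathcal F\dashv\mathcal U$, $\mathcal F:\mathscr C\to\mathcal L$, between cartesian $(\mathscr C,\times,I)$ and symmetric monoidal $(\mathcal L,\otimes,1)$ (symmetry $\sigma$); $\mathcal U$ lax monoidal via $n_{A,B}$; $\mathcal F$ strong monoidal via isomorphisms $m_{X,Y}:\mathcal F(X)\otimes\mathcal F(Y)\to\mathcal F(X\times Y)$, $m_1$; unit $\eta$, comonad $!=\mathcal F\mathcal U$ with comultiplication $\mathbf p$; $\mathbf c_X:=\mathcal F(\Delta_X);m_{X,X}^{-1}$, $\mathbf w_X:=\mathcal F(t_X);m_1^{-1}$; $\mathbf c_A:=\mathbf c_{\mathcal U(A)}$, $\mathbf w_A:=\mathbf w_{\mathcal U(A)}$. $LS(\mathscr C)$: objects $(X,A)$; morphisms $(f,u):(X,A)\to(Y,B)$ with $f:X\to Y$, $u:\mathcal F(X)\otimes A\to B$; composition $(f,u);(g,v)=(f;g,(\mathbf c_X\otimes\mathrm{id}_A);(\mathcal F(f)\otimes u);v)$; identity $(\mathrm{id}_X,\mathbf w_X\otimes\mathrm{id}_A)$; $\mathbf{ls}(f,u)=f$; fibre $LS(\mathscr C)_X$ = morphisms $(\mathrm{id}_X,u)$,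 with $(X,A)\otimes_X(X,B)=(X,A\otimes B)$ and $(\mathrm{id}_X,u)\otimes_X(\mathrm{id}_X,v)=(\mathrm{id}_X,(\mathbf c_X\otimes\mathrm{id});(\mathrm{id}\otimes\sigma_{\mathcal F(X),A}\otimes\mathrm{id});(u\otimes v))$. With biproducts $\oplus$ in $\mathcal L$: fibrewise injections $\iota^X_i=(\mathrm{id}_X,\mathbf w_X\otimes\iota_i)$; products in $LS(\mathscr C)$: $(X\times Y,A\oplus B)$, projections $(\pi_i,\mathbf w_{X\times Y}\otimes\pi_i)$. GDSC: $\mathcal L$ additive (CMon-enriched, $\otimes$ bilinear) with finite products, and $\mathcal T:\mathscr C\to LS(\mathscr C)$ with: (t.1) $\mathbf{ls}\circ\mathcal T=\mathrm{id}$, $\mathcal T(X)=(X,\lambda(X))$, and $\varphi_{X,Y}:=\langle\mathcal T(\pi_1),\mathcal T(\pi_2)\rangle:\mathcal T(X\times Y)\to(X\times Y,\lambda(X)\oplus\lambda(Y))$ iso; (t.2) $\mathcal T(\mathcal U(A))=(\mathcal U(A),A)$; (t.3) with $i^{X,Y}_2:=\iota^{X\times Y}_2;\varphi^{-1}_{X,Y}$, $⦃(f,u)⦄:=\langle\pi_1;f,(\eta_X\times\mathrm{id});n_{\mathcal F(X),A};\mathcal U(u)\rangle$, $W(f,u):=(⦃(f,u)⦄,(\mathcal F(\pi_1)\otimes\mathrm{id}_A);u)$: $W(f,u);i^{Y,\mathcal U(B)}_2=i^{X,\mathcal U(A)}_2;\mathcal T(⦃(f,u)⦄)$. Differential: for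 $h:X\to Y$ with $\mathcal T(h)=(h,v)$, $\mathrm D(h):=(\mathrm{id}_X,v)$; for $h:X\times Y\to Z$, $\mathrm D_2(h):=i^{X,Y}_2;\mathrm D(h)$. $\mathscr D^X_A:=\mathrm D_2(\pi_2;\eta_{\mathcal U(A)}):(X\times\mathcal U(A),A)\to(X\times\mathcal U(A),!A)$. $\Sigma_{(X,A)}:LS(\mathscr C)_{X\times\mathcal U(A)}\to LS(\mathscr C)_X$: $(X\times\mathcal U(A),B)\mapsto(X,!A\otimes B)$, $(\mathrm{id},u)\mapsto(\mathrm{id}_X,(\mathrm{id}_{\mathcal F(X)}\otimes\mathbf c_A\otimes\mathrm{id}_B);(\sigma_{\mathcal F(X),!A}\otimes\mathrm{id}_{!A\otimes B});(\mathrm{id}_{!A}\otimes((m_{X,\mathcal U(A)}\otimes\mathrm{id}_B);u)))$. $\mu^{(X,A)}_{(X,B)}:=(\mathrm{id}_X,\mathbf w_X\otimes\mathbf w_A\otimes\mathrm{id}_B)$. Deriving transform: $\partial^X_A:=\Sigma_{(X,A)}(\mathscr D^X_A);\mu^{(X,A)}_{(X,!A)}:(X,!A\otimes A)\to(X,!A)$. Fibrewise structure: $\mathbf p^X_A:=(\mathrm{id}_X,\mathbf w_X\otimes\mathbf p_A):(X,!A)\to(X,!!A)$, $\mathbf c^X_A:=(\mathrm{id}_X,\mathbf w_X\otimes\mathbf c_A):(X,!A)\to(X,!A\otimes!A)$. *)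

(* Defs.v *)
(* Composition is DIAGRAMMATIC: [f >> g] means "first f, then g". *)

Set Implicit Arguments.
Unset Strict Implicit.
Unset Printing Implicit Defensive.

Record CatData := {
  ob :> Type;
  hom : ob -> ob -> Type;
  idm : forall a : ob, hom a a;
  comp : forall a b c : ob, hom a b -> hom b c -> hom a c }.
Arguments hom {_} _ _.
Arguments idm {_} _.
Arguments comp {_ _ _ _} _ _.
Notation "f >> g" := (comp f g) (at level 40, left associativity).

Record IsCat (C : CatData) : Prop := {
  comp_idl : forall (a b : C) (f : hom a b), idm a >> f = f;
  comp_idr : forall (a b : C) (f : hom a b), f >> idm b = f;
  comp_assoc : forall (a b c d : C) (f : hom a b) (g : hom b c) (h : hom c d),
      (f >> g) >> h = f >> (g >> h) }.

Record Cat := { cdata :> CatData; cat_ok : IsCat cdata }.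

Record Functor (C D : CatData) := {
  fobj :> C -> D;
  fmap : forall a b : C, hom a b -> hom (fobj a) (fobj b) }.
Arguments fmap {_ _} _ {_ _} _.

Record IsFunctor (C D : CatData) (F : Functor C D) : Prop := {
  fmap_id : forall a : C, fmap F (idm a) = idm (F a);
  fmap_comp : forall (a b c : C) (f : hom a b) (g : hom b c),
      fmap F (f >> g) = fmap F f >> fmap F g }.

Record CartData (C : CatData) := {
  term : C;
  bang : forall x : C, hom x term;
  cprod : C -> C -> C;
  cpr1 : forall x y : C, hom (cprod x y) x;
  cpr2 : forall x y : C, hom (cprod x y) y;
  cpair : forall z x y : C, hom z x -> hom z y -> hom z (cprod x y) }.
Arguments term {_} _.
Arguments bang {_} _ _.
Arguments cprod {_} _ _ _.
Arguments cpr1 {_} _ _ _.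
Arguments cpr2 {_} _ _ _.
Arguments cpair {_} _ {_ _ _} _ _.

Record IsCart (C : CatData) (P : CartData C) : Prop := {
  bang_uniq : forall (x : C) (f : hom x (term P)), f = bang P x;
  cpair_pr1 : forall (z x y : C) (f : hom z x) (g : hom z y),
      cpair P f g >> cpr1 P x y = f;
  cpair_pr2 : forall (z x y : C) (f : hom z x) (g : hom z y),
      cpair P f g >> cpr2 P x y = g;
  cpair_uniq : forall (z x y : C) (h : hom z (cprod P x y)),
      h = cpair P (h >> cpr1 P x y) (h >> cpr2 P x y) }.

Section CartOps.
Variables (C : CatData) (P : CartData C).
Definition prodm (a a' b b' : C) (f : hom a a') (g : hom b b') :
  hom (cprod P a b) (cprod P a' b') :=
  cpair P (cpr1 P a b >> f) (cpr2 P a b >> g).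
Definition cassoc (x y z : C) :
  hom (cprod P (cprod P x y) z) (cprod P x (cprod P y z)) :=
  cpair P (cpr1 P _ _ >> cpr1 P x y)
          (cpair P (cpr1 P _ _ >> cpr2 P x y) (cpr2 P _ z)).
Definition cswap (x y : C) : hom (cprod P x y) (cprod P y x) :=
  cpair P (cpr2 P x y) (cpr1 P x y).
Definition diag (x : C) : hom x (cprod P x x) := cpair P (idm x) (idm x).
End CartOps.
Arguments prodm {_} _ {_ _ _ _} _ _.
Arguments cassoc {_} _ _ _ _.
Arguments cswap {_} _ _ _.
Arguments diag {_} _ _.

Record SMCData (L : CatData) := {
  tens : L -> L -> L;
  munit : L;
  tensm : forall a a' b b' : L, hom a a' -> hom b b' -> hom (tens a b) (tens a' b');
  assoc : forall a b c : L, hom (tens (tens a b) c) (tens a (tens b c));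
  assoc_inv : forall a b c : L, hom (tens a (tens b c)) (tens (tens a b) c);
  lu : forall a : L, hom (tens munit a) a;
  lu_inv : forall a : L, hom a (tens munit a);
  ru : forall a : L, hom (tens a munit) a;
  ru_inv : forall a : L, hom a (tens a munit);
  sym : forall a b : L, hom (tens a b) (tens b a) }.
Arguments tens {_} _ _ _.
Arguments munit {_} _.
Arguments tensm {_} _ {_ _ _ _} _ _.
Arguments assoc {_} _ _ _ _.
Arguments assoc_inv {_} _ _ _ _.
Arguments lu {_} _ _.
Arguments lu_inv {_} _ _.
Arguments ru {_} _ _.
Arguments ru_inv {_} _ _.
Arguments sym {_} _ _ _.

Record IsSMC (L : CatData) (M : SMCData L) : Prop := {
  tensm_id : forall a b : L, tensm M (idm a) (idm b) = idm (tens M a b);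
  tensm_comp : forall (a a' a'' b b' b'' : L) (f : hom a a') (f' : hom a' a'')
      (g : hom b b') (g' : hom b' b''),
      tensm M (f >> f') (g >> g') = tensm M f g >> tensm M f' g';
  assoc_iso1 : forall a b c : L, assoc M a b c >> assoc_inv M a b c = idm _;
  assoc_iso2 : forall a b c : L, assoc_inv M a b c >> assoc M a b c = idm _;
  assoc_nat : forall (a a' b b' c c' : L) (f : hom a a') (g : hom b b') (h : hom c c'),
      tensm M (tensm M f g) h >> assoc M a' b' c' = assoc M a b c >> tensm M f (tensm M g h);
  lu_iso1 : forall a : L, lu M a >> lu_inv M a = idm _;
  lu_iso2 : forall a : L, lu_inv M a >> lu M a = idm _;
  lu_nat : forall (a b : L) (f : hom a b), tensm M (idm (munit M)) f >> lu M b = lu M a >> f;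
  ru_iso1 : forall a : L, ru M a >> ru_inv M a = idm _;
  ru_iso2 : forall a : L, ru_inv M a >> ru M a = idm _;
  ru_nat : forall (a b : L) (f : hom a b), tensm M f (idm (munit M)) >> ru M b = ru M a >> f;
  sym_inv : forall a b : L, sym M a b >> sym M b a = idm _;
  sym_nat : forall (a a' b b' : L) (f : hom a a') (g : hom b b'),
      tensm M f g >> sym M a' b' = sym M a b >> tensm M g f;
  pentagon : forall a b c d : L,
      assoc M (tens M a b) c d >> assoc M a b (tens M c d)
      = tensm M (assoc M a b c) (idm d) >> assoc M a (tens M b c) d
        >> tensm M (idm a) (assoc M b c d);
  triangle : forall a b : L,
      assoc M a (munit M) b >> tensm M (idm a) (lu M b) = tensm M (ru M a) (idm b);
  hexagon : forall a b c : L,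
      assoc M a b c >> sym M a (tens M b c) >> assoc M b c a
      = tensm M (sym M a b) (idm c) >> assoc M b a c >> tensm M (idm b) (sym M a c) }.

Record AddData (L : CatData) := {
  zero : forall a b : L, hom a b;
  add : forall a b : L, hom a b -> hom a b -> hom a b }.
Arguments zero {_} _ _ _.
Arguments add {_} _ {_ _} _ _.

Record IsAdditive (L : CatData) (M : SMCData L) (Z : AddData L) : Prop := {
  add_assoc : forall (a b : L) (f g h : hom a b), add Z (add Z f g) h = add Z f (add Z g h);
  add_comm : forall (a b : L) (f g : hom a b), add Z f g = add Z g f;
  add_0l : forall (a b : L) (f : hom a b), add Z (zero Z a b) f = f;
  comp_addl : forall (a b c : L) (f g : hom a b) (h : hom b c),
      add Z f g >> h = add Z (f >> h) (g >> h);
  comp_addr : forall (a b c : L) (h : hom a b) (f g : hom b c),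
      h >> add Z f g = add Z (h >> f) (h >> g);
  comp_0l : forall (a b c : L) (h : hom b c), zero Z a b >> h = zero Z a c;
  comp_0r : forall (a b c : L) (h : hom a b), h >> zero Z b c = zero Z a c;
  tensm_addl : forall (a a' b b' : L) (f f' : hom a a') (g : hom b b'),
      tensm M (add Z f f') g = add Z (tensm M f g) (tensm M f' g);
  tensm_addr : forall (a a' b b' : L) (f : hom a a') (g g' : hom b b'),
      tensm M f (add Z g g') = add Z (tensm M f g) (tensm M f g');
  tensm_0l : forall (a a' b b' : L) (g : hom b b'),
      tensm M (zero Z a a') g = zero Z _ _;
  tensm_0r : forall (a a' b b' : L) (f : hom a a'),
      tensm M f (zero Z b b') = zero Z _ _ }.

Record LNL := {
  CC : Cat;
  Ccart : CartData CC;
  Ccart_ok : IsCart Ccart;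
  LL : Cat;
  Lsmc : SMCData LL;
  Lsmc_ok : IsSMC Lsmc;
  FF : Functor CC LL;
  FF_ok : IsFunctor FF;
  UU : Functor LL CC;
  UU_ok : IsFunctor UU;
  eta : forall X : CC, hom X (UU (FF X));
  eps : forall A : LL, hom (FF (UU A)) A;
  eta_nat : forall (X Y : CC) (f : hom X Y), f >> eta Y = eta X >> fmap UU (fmap FF f);
  eps_nat : forall (A B : LL) (g : hom A B), fmap FF (fmap UU g) >> eps B = eps A >> g;
  tri1 : forall X : CC, fmap FF (eta X) >> eps (FF X) = idm (FF X);
  tri2 : forall A : LL, eta (UU A) >> fmap UU (eps A) = idm (UU A);
  mm : forall X Y : CC, hom (tens Lsmc (FF X) (FF Y)) (FF (cprod Ccart X Y));
  mm_inv : forall X Y : CC, hom (FF (cprod Ccart X Y)) (tens Lsmc (FF X) (FF Y));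
  m1 : hom (munit Lsmc) (FF (term Ccart));
  m1_inv : hom (FF (term Ccart)) (munit Lsmc);
  mm_iso1 : forall X Y : CC, mm X Y >> mm_inv X Y = idm _;
  mm_iso2 : forall X Y : CC, mm_inv X Y >> mm X Y = idm _;
  m1_iso1 : m1 >> m1_inv = idm _;
  m1_iso2 : m1_inv >> m1 = idm _;
  mm_nat : forall (X X' Y Y' : CC) (f : hom X X') (g : hom Y Y'),
      tensm Lsmc (fmap FF f) (fmap FF g) >> mm X' Y' = mm X Y >> fmap FF (prodm Ccart f g);
  mm_assoc : forall X Y Z : CC,
      tensm Lsmc (mm X Y) (idm (FF Z)) >> mm (cprod Ccart X Y) Z >> fmap FF (cassoc Ccart X Y Z)
      = assoc Lsmc (FF X) (FF Y) (FF Z) >> tensm Lsmc (idm (FF X)) (mm Y Z)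
        >> mm X (cprod Ccart Y Z);
  mm_lunit : forall X : CC,
      tensm Lsmc m1 (idm (FF X)) >> mm (term Ccart) X >> fmap FF (cpr2 Ccart (term Ccart) X)
      = lu Lsmc (FF X);
  mm_runit : forall X : CC,
      tensm Lsmc (idm (FF X)) m1 >> mm X (term Ccart) >> fmap FF (cpr1 Ccart X (term Ccart))
      = ru Lsmc (FF X);
  mm_sym : forall X Y : CC,
      mm X Y >> fmap FF (cswap Ccart X Y) = sym Lsmc (FF X) (FF Y) >> mm Y X;
  nn : forall A B : LL, hom (cprod Ccart (UU A) (UU B)) (UU (tens Lsmc A B));
  n1 : hom (term Ccart) (UU (munit Lsmc));
  nn_nat : forall (A A' B B' : LL) (f : hom A A') (g : hom B B'),
      prodm Ccart (fmap UU f) (fmap UU g) >> nn A' B' = nn A B >> fmap UU (tensm Lsmc f g);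
  nn_assoc : forall A B C : LL,
      prodm Ccart (nn A B) (idm (UU C)) >> nn (tens Lsmc A B) C >> fmap UU (assoc Lsmc A B C)
      = cassoc Ccart (UU A) (UU B) (UU C) >> prodm Ccart (idm (UU A)) (nn B C)
        >> nn A (tens Lsmc B C);
  nn_lunit : forall A : LL,
      prodm Ccart n1 (idm (UU A)) >> nn (munit Lsmc) A >> fmap UU (lu Lsmc A)
      = cpr2 Ccart (term Ccart) (UU A);
  nn_runit : forall A : LL,
      prodm Ccart (idm (UU A)) n1 >> nn A (munit Lsmc) >> fmap UU (ru Lsmc A)
      = cpr1 Ccart (UU A) (term Ccart);
  nn_sym : forall A B : LL,
      nn A B >> fmap UU (sym Lsmc A B) = cswap Ccart (UU A) (UU B) >> nn B A;
  eta_mon : forall X Y : CC,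
      eta (cprod Ccart X Y)
      = prodm Ccart (eta X) (eta Y) >> nn (FF X) (FF Y) >> fmap UU (mm X Y);
  eta_mon1 : eta (term Ccart) = n1 >> fmap UU m1;
  eps_mon : forall A B : LL,
      mm (UU A) (UU B) >> fmap FF (nn A B) >> eps (tens Lsmc A B)
      = tensm Lsmc (eps A) (eps B);
  eps_mon1 : m1 >> fmap FF n1 >> eps (munit Lsmc) = idm (munit Lsmc) }.







Arguments eta : clear implicits.
Arguments eps : clear implicits.
Arguments mm : clear implicits.
Arguments mm_inv : clear implicits.
Arguments nn : clear implicits.

Section LSDefs.
Variable G : LNL.

Local Notation C := (CC G).
Local Notation L := (LL G).
Local Notation "a ⊗ b" := (tens (Lsmc G) a b) (at level 35, right associativity).
Local Notation "f ⊗m g" := (tensm (Lsmc G) f g) (at level 35).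
Local Notation F := (FF G).
Local Notation U := (UU G).
Local Notation "x × y" := (cprod (Ccart G) x y) (at level 34).

Definition bangL (A : L) : L := F (U A).

Definition pcomul (A : L) : hom (bangL A) (bangL (bangL A)) := fmap F (eta G (U A)).

Definition cX (X : C) : hom (F X) (F X ⊗ F X) :=
  fmap F (diag (Ccart G) X) >> mm_inv G X X.
Definition wX (X : C) : hom (F X) (munit (Lsmc G)) :=
  fmap F (bang (Ccart G) X) >> m1_inv G.
Definition cA (A : L) : hom (bangL A) (bangL A ⊗ bangL A) := cX (U A).
Definition wA (A : L) : hom (bangL A) (munit (Lsmc G)) := wX (U A).

(* morphisms (X,A) -> (Y,B) of LS(C): pairs (f, u) *)
Definition LSHom (X : C) (A : L) (Y : C) (B : L) : Type :=
  (hom X Y * hom (F X ⊗ A) B)%type.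

Definition LScomp (X Y Z : C) (A B D : L) (p : LSHom X A Y B) (q : LSHom Y B Z D) :
  LSHom X A Z D :=
  (fst p >> fst q,
   (cX X ⊗m idm A) >> assoc (Lsmc G) (F X) (F X) A
     >> (fmap F (fst p) ⊗m snd p) >> snd q).

Definition LSid (X : C) (A : L) : LSHom X A X A :=
  (idm X, (wX X ⊗m idm A) >> lu (Lsmc G) A).

(* the fibrewise image of an L-morphism g : A -> B, i.e. (id_X, w_X ⊗ g) *)
Definition lift (X : C) (A B : L) (g : hom A B) : LSHom X A X B :=
  (idm X, (wX X ⊗m g) >> lu (Lsmc G) B).

(* fibrewise tensor  (id,u) ⊗_X (id,v) *)
Definition fibtens (X : C) (A A' B B' : L) (p : LSHom X A X A') (q : LSHom X B X B') :
  LSHom X (A ⊗ B) X (A' ⊗ B') :=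
  (idm X,
   (cX X ⊗m idm (A ⊗ B))
   >> assoc (Lsmc G) (F X) (F X) (A ⊗ B)
   >> (idm (F X) ⊗m assoc_inv (Lsmc G) (F X) A B)
   >> (idm (F X) ⊗m (sym (Lsmc G) (F X) A ⊗m idm B))
   >> (idm (F X) ⊗m assoc (Lsmc G) A (F X) B)
   >> assoc_inv (Lsmc G) (F X) A (F X ⊗ B)
   >> (snd p ⊗m snd q)).

(* the fibrewise functor Sigma_{(X,A)} : LS(C)_{X×U(A)} -> LS(C)_X *)
Definition Sigma (X : C) (A B D : L) (u : hom (F (X × U A) ⊗ B) D) :
  LSHom X (bangL A ⊗ B) X (bangL A ⊗ D) :=
  (idm X,
   (idm (F X) ⊗m (cA A ⊗m idm B))
   >> (idm (F X) ⊗m assoc (Lsmc G) (bangL A) (bangL A) B)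
   >> assoc_inv (Lsmc G) (F X) (bangL A) (bangL A ⊗ B)
   >> (sym (Lsmc G) (F X) (bangL A) ⊗m idm (bangL A ⊗ B))
   >> assoc (Lsmc G) (bangL A) (F X) (bangL A ⊗ B)
   >> (idm (bangL A) ⊗m assoc_inv (Lsmc G) (F X) (bangL A) B)
   >> (idm (bangL A) ⊗m ((mm G X (U A) ⊗m idm B) >> u))).

Definition mu (X : C) (A B : L) : LSHom X (bangL A ⊗ B) X B :=
  lift X ((wA A ⊗m idm B) >> lu (Lsmc G) B).

Definition pX (X : C) (A : L) : LSHom X (bangL A) X (bangL (bangL A)) := lift X (pcomul A).
Definition cXA (X : C) (A : L) : LSHom X (bangL A) X (bangL A ⊗ bangL A) := lift X (cA A).

Definition castLS (X Y : C) (A A' B B' : L) (e1 : A = A') (e2 : B = B')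
  (h : LSHom X A Y B) : LSHom X A' Y B' :=
  match e1 in _ = A1 return LSHom X A1 Y B' with
  | eq_refl => match e2 in _ = B1 return LSHom X A Y B1 with
               | eq_refl => h end end.

Definition brace (X Y : C) (A B : L) (f : hom X Y) (u : hom (F X ⊗ A) B) :
  hom (X × U A) (Y × U B) :=
  cpair (Ccart G) (cpr1 (Ccart G) X (U A) >> f)
        (prodm (Ccart G) (eta G X) (idm (U A)) >> nn G (F X) A >> fmap U u).

Definition Wmor (X Y : C) (A B : L) (f : hom X Y) (u : hom (F X ⊗ A) B) :
  LSHom (X × U A) A (Y × U B) B :=
  (brace f u, (fmap F (cpr1 (Ccart G) X (U A)) ⊗m idm A) >> u).

End LSDefs.

Record GData (G : LNL) := {
  Ladd : AddData (LL G);
  Ladd_ok : IsAdditive (Lsmc G) Ladd;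
  Lprod : CartData (LL G);        (* finite products in L (biproducts, L additive) *)
  Lprod_ok : IsCart Lprod;
  lam : CC G -> LL G;             (* T(X) = (X, lam X) *)
  Tv : forall (X Y : CC G), hom X Y -> hom (tens (Lsmc G) (FF G X) (lam X)) (lam Y);
                                  (* T(f) = (f, Tv f) ; thus ls ∘ T = id *)
  phi_inv : forall X Y : CC G,
      LSHom (cprod (Ccart G) X Y) (cprod Lprod (lam X) (lam Y))
            (cprod (Ccart G) X Y) (lam (cprod (Ccart G) X Y));
  lamU : forall A : LL G, lam (UU G A) = A }.
Arguments Ladd {_} _.
Arguments Lprod {_} _.
Arguments lam {_} _ _.
Arguments Tv {_} _ {_ _} _.
Arguments phi_inv {_} _ _ _.
Arguments lamU {_} _ _.

Section GDefs.
Variables (G : LNL) (T : GData G).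
Local Notation C := (CC G).
Local Notation L := (LL G).
Local Notation "x × y" := (cprod (Ccart G) x y) (at level 34).

Definition Tmor (X Y : C) (f : hom X Y) : LSHom X (lam T X) Y (lam T Y) := (f, Tv T f).

Definition LSpair (Z X Y : C) (D A B : L) (p : LSHom Z D X A) (q : LSHom Z D Y B) :
  LSHom Z D (X × Y) (cprod (Lprod T) A B) :=
  (cpair (Ccart G) (fst p) (fst q), cpair (Lprod T) (snd p) (snd q)).

Definition phi (X Y : C) :
  LSHom (X × Y) (lam T (X × Y)) (X × Y) (cprod (Lprod T) (lam T X) (lam T Y)) :=
  LSpair (Tmor (cpr1 (Ccart G) X Y)) (Tmor (cpr2 (Ccart G) X Y)).

Definition inj2 (A B : L) : hom B (cprod (Lprod T) A B) :=
  cpair (Lprod T) (zero (Ladd T) B A) (idm B).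

Definition i2 (X Y : C) : LSHom (X × Y) (lam T Y) (X × Y) (lam T (X × Y)) :=
  LScomp (lift (X × Y) (inj2 (lam T X) (lam T Y))) (phi_inv T X Y).

(* i_2^{X,U A}, with its source read as (X × U A, A) via (t.2) *)
Definition i2U (X : C) (A : L) : LSHom (X × UU G A) A (X × UU G A) (lam T (X × UU G A)) :=
  castLS (lamU T A) eq_refl (i2 X (UU G A)).

Definition Dmor (X Y : C) (h : hom X Y) : LSHom X (lam T X) X (lam T Y) := (idm X, Tv T h).

Definition D2 (X Y Z : C) (h : hom (X × Y) Z) : LSHom (X × Y) (lam T Y) (X × Y) (lam T Z) :=
  LScomp (i2 X Y) (Dmor h).

Definition scrD (X : C) (A : L) : LSHom (X × UU G A) A (X × UU G A) (bangL A) :=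
  castLS (lamU T A) (lamU T (bangL A))
    (D2 (cpr2 (Ccart G) X (UU G A) >> eta G (UU G A))).

Definition deriv (X : C) (A : L) : LSHom X (tens (Lsmc G) (bangL A) A) X (bangL A) :=
  LScomp (Sigma (snd (scrD X A))) (mu X A (bangL A)).

End GDefs.

Record IsGDSC (G : LNL) (T : GData G) : Prop := {
  T_id : forall X : CC G, Tmor T (idm X) = LSid X (lam T X);
  T_comp : forall (X Y Z : CC G) (f : hom X Y) (g : hom Y Z),
      Tmor T (f >> g) = LScomp (Tmor T f) (Tmor T g);
  phi_iso1 : forall X Y : CC G, LScomp (phi T X Y) (phi_inv T X Y) = LSid _ _;
  phi_iso2 : forall X Y : CC G, LScomp (phi_inv T X Y) (phi T X Y) = LSid _ _;
  t3 : forall (X Y : CC G) (A B : LL G) (f : hom X Y)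
         (u : hom (tens (Lsmc G) (FF G X) A) B),
      LScomp (Wmor f u) (i2U T Y B) = LScomp (i2U T X A) (Tmor T (brace f u)) }.

(* Main.v *)
Require Import Defs.

From Stdlib Require Export Setoid.
Set Implicit Arguments.
Unset Strict Implicit.

Section Gen.
Variable K : Cat.
Lemma cidl (a b : K) (f : hom a b) : idm a >> f = f.
Proof. exact (comp_idl (cat_ok K) f). Qed.
Lemma cidr (a b : K) (f : hom a b) : f >> idm b = f.
Proof. exact (comp_idr (cat_ok K) f). Qed.
Lemma cas (a b c d : K) (f : hom a b) (g : hom b c) (h : hom c d) :
  (f >> g) >> h = f >> (g >> h).
Proof. exact (comp_assoc (cat_ok K) f g h). Qed.
Lemma cut2 (a b c d : K) (f : hom a b) (g : hom b c) (h : hom a c) :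
  f >> g = h -> forall r : hom c d, f >> (g >> r) = h >> r.
Proof. intros E r. rewrite <- E, !cas. reflexivity. Qed.
Lemma cut3 (a b c e d : K) (f : hom a b) (g : hom b c) (k : hom c e) (h : hom a e) :
  f >> (g >> k) = h -> forall r : hom e d, f >> (g >> (k >> r)) = h >> r.
Proof. intros E r. rewrite <- E, !cas. reflexivity. Qed.
Lemma cut4 (a b c e e' d : K) (f : hom a b) (g : hom b c) (k : hom c e) (k' : hom e e') (h : hom a e') :
  f >> (g >> (k >> k')) = h -> forall r : hom e' d, f >> (g >> (k >> (k' >> r))) = h >> r.
Proof. intros E r. rewrite <- E, !cas. reflexivity. Qed.
Lemma cut5 (a b c e e' e'' d : K) (f : hom a b) (g : hom b c) (k : hom c e) (k' : hom e e') (k'' : hom e' e'') (h : hom a e'') :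
  f >> (g >> (k >> (k' >> k''))) = h -> forall r : hom e'' d, f >> (g >> (k >> (k' >> (k'' >> r)))) = h >> r.
Proof. intros E r. rewrite <- E, !cas. reflexivity. Qed.
Lemma cut6 (a b c e e' e'' e3 d : K) (f : hom a b) (g : hom b c) (k : hom c e) (k' : hom e e') (k'' : hom e' e'') (k3 : hom e'' e3) (h : hom a e3) :
  f >> (g >> (k >> (k' >> (k'' >> k3)))) = h -> forall r : hom e3 d, f >> (g >> (k >> (k' >> (k'' >> (k3 >> r))))) = h >> r.
Proof. intros E r. rewrite <- E, !cas. reflexivity. Qed.
End Gen.

Ltac ar := repeat rewrite cas.
Tactic Notation "rw" uconstr(e) := first [ rewrite e | rewrite (cut2 e) | rewrite (cut3 e) | rewrite (cut4 e) | rewrite (cut5 e) | rewrite (cut6 e)]; ar.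
Tactic Notation "rwl" uconstr(e) := rw (eq_sym e).
Ltac pg := match goal with |- ?g => idtac g end.
Ltac ar_in H := repeat rewrite cas in H.

Set Implicit Arguments.
Unset Strict Implicit.

Section SMC.
Variable G : LNL.
Local Notation L := (LL G).
Local Notation "a ⊗ b" := (tens (Lsmc G) a b) (at level 35, right associativity).
Local Notation "f ⊗m g" := (tensm (Lsmc G) f g) (at level 35).
Local Notation al := (assoc (Lsmc G)).
Local Notation ali := (assoc_inv (Lsmc G)).
Local Notation lam' := (lu (Lsmc G)).
Local Notation lami := (lu_inv (Lsmc G)).
Local Notation rho := (ru (Lsmc G)).
Local Notation rhoi := (ru_inv (Lsmc G)).
Local Notation sg := (sym (Lsmc G)).
Local Notation I := (munit (Lsmc G)).
Let S := Lsmc_ok G.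

Lemma tcomp (a a' a'' b b' b'' : L) (f : hom a a') (f' : hom a' a'') (g : hom b b') (g' : hom b' b'') :
  (f >> f') ⊗m (g >> g') = (f ⊗m g) >> (f' ⊗m g').
Proof. exact (tensm_comp S f f' g g'). Qed.
Lemma tid (a b : L) : idm a ⊗m idm b = idm (a ⊗ b).
Proof. exact (tensm_id S a b). Qed.
Lemma tsplit (a a' b b' : L) (f : hom a a') (g : hom b b') :
  f ⊗m g = (f ⊗m idm b) >> (idm a' ⊗m g).
Proof. rewrite <- tcomp, cidl, cidr. reflexivity. Qed.
Lemma tsplit' (a a' b b' : L) (f : hom a a') (g : hom b b') :
  f ⊗m g = (idm a ⊗m g) >> (f ⊗m idm b').
Proof. rewrite <- tcomp, cidl, cidr. reflexivity. Qed.
Lemma tcomm (a a' b b' : L) (f : hom a a') (g : hom b b') :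
  (f ⊗m idm b) >> (idm a' ⊗m g) = (idm a ⊗m g) >> (f ⊗m idm b').
Proof. rewrite <- tsplit, <- tsplit'. reflexivity. Qed.
Lemma tfuse (a a' a'' b b' b'' : L) (f : hom a a') (f' : hom a' a'') (g : hom b b') (g' : hom b' b'') :
  (f ⊗m g) >> (f' ⊗m g') = (f >> f') ⊗m (g >> g').
Proof. symmetry; apply tcomp. Qed.

Lemma an (a a' b b' c c' : L) (f : hom a a') (g : hom b b') (h : hom c c') :
  ((f ⊗m g) ⊗m h) >> al a' b' c' = al a b c >> (f ⊗m (g ⊗m h)).
Proof. exact (assoc_nat S f g h). Qed.
Lemma aK (a b c : L) : al a b c >> ali a b c = idm _.
Proof. exact (assoc_iso1 S a b c). Qed.
Lemma aK' (a b c : L) : ali a b c >> al a b c = idm _.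
Proof. exact (assoc_iso2 S a b c). Qed.
Lemma an' (a a' b b' c c' : L) (f : hom a a') (g : hom b b') (h : hom c c') :
  (f ⊗m (g ⊗m h)) >> ali a' b' c' = ali a b c >> ((f ⊗m g) ⊗m h).
Proof.
  rewrite <- (cidl (f ⊗m (g ⊗m h))), <- (aK' a b c). ar. rw (eq_sym (an f g h)).
  rewrite aK, cidr. reflexivity.
Qed.
Lemma lun (a b : L) (f : hom a b) : (idm I ⊗m f) >> lam' b = lam' a >> f.
Proof. exact (lu_nat S f). Qed.
Lemma run (a b : L) (f : hom a b) : (f ⊗m idm I) >> rho b = rho a >> f.
Proof. exact (ru_nat S f). Qed.
Lemma sn (a a' b b' : L) (f : hom a a') (g : hom b b') :
  (f ⊗m g) >> sg a' b' = sg a b >> (g ⊗m f).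
Proof. exact (sym_nat S f g). Qed.
Lemma sK (a b : L) : sg a b >> sg b a = idm _.
Proof. exact (sym_inv S a b). Qed.
Lemma luK (a : L) : lam' a >> lami a = idm _. Proof. exact (lu_iso1 S a). Qed.
Lemma luK' (a : L) : lami a >> lam' a = idm _. Proof. exact (lu_iso2 S a). Qed.
Lemma ruK (a : L) : rho a >> rhoi a = idm _. Proof. exact (ru_iso1 S a). Qed.
Lemma ruK' (a : L) : rhoi a >> rho a = idm _. Proof. exact (ru_iso2 S a). Qed.
Lemma pent (a b c d : L) :
  al (a ⊗ b) c d >> al a b (c ⊗ d)
  = (al a b c ⊗m idm d) >> al a (b ⊗ c) d >> (idm a ⊗m al b c d).
Proof. exact (pentagon S a b c d). Qed.
Lemma tri (a b : L) : al a I b >> (idm a ⊗m lam' b) = rho a ⊗m idm b.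
Proof. exact (triangle S a b). Qed.
Lemma hex (a b c : L) :
  al a b c >> sg a (b ⊗ c) >> al b c a
  = (sg a b ⊗m idm c) >> al b a c >> (idm b ⊗m sg a c).
Proof. exact (hexagon S a b c). Qed.

Lemma canI (a b : L) (f g : hom a b) : idm I ⊗m f = idm I ⊗m g -> f = g.
Proof.
  intro E. rewrite <- (cidl f), <- (cidl g), <- (luK' a). ar.
  rewrite <- !lun, E. reflexivity.
Qed.
Lemma canIr (a b : L) (f g : hom a b) : f ⊗m idm I = g ⊗m idm I -> f = g.
Proof.
  intro E. rewrite <- (cidl f), <- (cidl g), <- (ruK' a). ar.
  rewrite <- !run, E. reflexivity.
Qed.

Lemma t1c (x a b c : L) (f : hom a b) (g : hom b c) :
  idm x ⊗m (f >> g) = (idm x ⊗m f) >> (idm x ⊗m g).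
Proof. rewrite <- tcomp, cidl. reflexivity. Qed.
Lemma tc1 (x a b c : L) (f : hom a b) (g : hom b c) :
  (f >> g) ⊗m idm x = (f ⊗m idm x) >> (g ⊗m idm x).
Proof. rewrite <- tcomp, cidl. reflexivity. Qed.

Lemma kelly (a b : L) : al I a b >> lam' (a ⊗ b) = lam' a ⊗m idm b.
Proof.
  apply canI.
  assert (E : (al I I a ⊗m idm b) >> (al I (I ⊗ a) b >> (idm I ⊗m (al I a b >> lam' (a ⊗ b))))
            = (al I I a ⊗m idm b) >> (al I (I ⊗ a) b >> (idm I ⊗m (lam' a ⊗m idm b)))).
  { rewrite t1c. rewrite <- !cas, <- pent. ar. rewrite tri, <- tid.
    rewrite <- an. rewrite <- an. rw (tfuse _ _ _ _). rewrite tri, cidl. reflexivity. }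
  rewrite <- (cidl (idm I ⊗m (al I a b >> lam' (a ⊗ b)))).
  rewrite <- (cidl (idm I ⊗m (lam' a ⊗m idm b))).
  rewrite <- (aK' I (I ⊗ a) b). ar.
  rewrite <- (cidl (al I (I ⊗ a) b >> (idm I ⊗m (al I a b >> lam' (a ⊗ b))))).
  rewrite <- (cidl (al I (I ⊗ a) b >> (idm I ⊗m (lam' a ⊗m idm b)))).
  rewrite <- tid, <- (aK' I I a), tc1. ar.
  rw E. reflexivity.
Qed.
Lemma kelly' (a b : L) : ali I a b >> (lam' a ⊗m idm b) = lam' (a ⊗ b).
Proof. rewrite <- kelly. rewrite <- cas, aK', cidl. reflexivity. Qed.
Lemma tri' (a b : L) : ali a I b >> (rho a ⊗m idm b) = idm a ⊗m lam' b.
Proof. rewrite <- tri. rewrite <- cas, aK', cidl. reflexivity. Qed.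

Lemma srl_aux (a b : L) : (rho a ⊗m idm b) >> sg a b = ((sg a I >> lam' a) ⊗m idm b) >> sg a b.
Proof.
  pose proof (hex a I b) as H. ar_in H.
  apply (f_equal (fun z => z >> lam' (b ⊗ a))) in H. ar_in H.
  transitivity (al a I b >> (sg a (I ⊗ b) >> (al I b a >> lam' (b ⊗ a)))).
  { rewrite kelly, <- sn. rw (tri _ _). reflexivity. }
  rewrite H. rw (lun _). rw (kelly _ _). rw (tfuse _ _ _ _). rewrite cidl. reflexivity.
Qed.
Lemma srl (a : L) : sg a I >> lam' a = rho a.
Proof.
  apply canIr. symmetry.
  rewrite <- (cidr (rho a ⊗m idm I)), <- (cidr ((sg a I >> lam' a) ⊗m idm I)).
  rewrite <- (sK a I). rewrite <- !cas, srl_aux. reflexivity.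
Qed.
Lemma slr (a : L) : sg I a >> rho a = lam' a.
Proof. rewrite <- srl. rewrite <- cas, sK, cidl. reflexivity. Qed.
Lemma alR (a b c c' : L) (h : hom c c') :
  al a b c >> (idm a ⊗m (idm b ⊗m h)) = (idm (a ⊗ b) ⊗m h) >> al a b c'.
Proof. rewrite <- an, tid. reflexivity. Qed.
Lemma aliR (a b c c' : L) (h : hom c c') :
  (idm a ⊗m (idm b ⊗m h)) >> ali a b c' = ali a b c >> (idm (a ⊗ b) ⊗m h).
Proof. rewrite an', tid. reflexivity. Qed.
Lemma alL (a a' b c : L) (f : hom a a') :
  al a b c >> (f ⊗m idm (b ⊗ c)) = ((f ⊗m idm b) ⊗m idm c) >> al a' b c.
Proof. rewrite an, tid. reflexivity. Qed.
Lemma aliL (a a' b c : L) (f : hom a a') :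
  (f ⊗m idm (b ⊗ c)) >> ali a' b c = ali a b c >> ((f ⊗m idm b) ⊗m idm c).
Proof. rewrite <- an', tid. reflexivity. Qed.
Lemma alM (a b b' c : L) (g : hom b b') :
  al a b c >> (idm a ⊗m (g ⊗m idm c)) = ((idm a ⊗m g) ⊗m idm c) >> al a b' c.
Proof. rewrite an. reflexivity. Qed.
Lemma aliM (a b b' c : L) (g : hom b b') :
  (idm a ⊗m (g ⊗m idm c)) >> ali a b' c = ali a b c >> ((idm a ⊗m g) ⊗m idm c).
Proof. rewrite an'. reflexivity. Qed.
Lemma tlr (a a' b b' b'' : L) (f : hom a a') (g : hom b b') (w : hom b' b'') :
  f ⊗m (g >> w) = (idm a ⊗m g) >> (f ⊗m w).
Proof. rewrite <- tcomp, cidl. reflexivity. Qed.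
Lemma tll (a a' a'' b b' : L) (f : hom a a') (f' : hom a' a'') (w : hom b b') :
  (f >> f') ⊗m w = (f ⊗m idm b) >> (f' ⊗m w).
Proof. rewrite <- tcomp, cidl. reflexivity. Qed.
Lemma trr (a a' b b' b'' : L) (f : hom a a') (g : hom b b') (h : hom b' b'') :
  f ⊗m (g >> h) = (f ⊗m g) >> (idm a' ⊗m h).
Proof. rewrite <- tcomp, cidr. reflexivity. Qed.
Lemma tlrr (a a' a'' b b' : L) (f : hom a a') (f' : hom a' a'') (w : hom b b') :
  (f >> f') ⊗m w = (f ⊗m w) >> (f' ⊗m idm b').
Proof. rewrite <- tcomp, cidr. reflexivity. Qed.
Lemma pentR (a b c d : L) :
  (idm a ⊗m al b c d) >> ali a b (c ⊗ d) = ali a (b ⊗ c) d >> ((ali a b c ⊗m idm d) >> al (a ⊗ b) c d).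
Proof.
  pose proof (pent a b c d) as H. ar_in H.
  rewrite <- (cidl (idm a ⊗m al b c d)), <- (aK' a (b ⊗ c) d). ar.
  rewrite <- (cidl (al a (b ⊗ c) d >> _)), <- tid, <- (aK' a b c), tc1. ar.
  rw (eq_sym H). rw (aK a b (c ⊗ d)). rewrite cidr. reflexivity.
Qed.
Lemma pentL (a b c d : L) :
  ali (a ⊗ b) c d >> ((al a b c ⊗m idm d) >> al a (b ⊗ c) d) = al a b (c ⊗ d) >> (idm a ⊗m ali b c d).
Proof.
  pose proof (pent a b c d) as H. ar_in H.
  rewrite <- (cidr (al a b c ⊗m idm d >> al a (b ⊗ c) d)), <- tid, <- (aK b c d), t1c. ar.
  rw (eq_sym H). rw (aK' (a ⊗ b) c d). rewrite cidl. reflexivity.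
Qed.
End SMC.

Set Implicit Arguments.
Unset Strict Implicit.

Section CartGen.
Variables (K : Cat) (P : CartData K) (HP : IsCart P).
Lemma pr1 (z x y : K) (f : hom z x) (g : hom z y) : cpair P f g >> cpr1 P x y = f.
Proof. exact (cpair_pr1 HP f g). Qed.
Lemma pr2 (z x y : K) (f : hom z x) (g : hom z y) : cpair P f g >> cpr2 P x y = g.
Proof. exact (cpair_pr2 HP f g). Qed.
Lemma cext (z x y : K) (h k : hom z (cprod P x y)) :
  h >> cpr1 P x y = k >> cpr1 P x y -> h >> cpr2 P x y = k >> cpr2 P x y -> h = k.
Proof. intros E1 E2. rewrite (cpair_uniq HP h), (cpair_uniq HP k), E1, E2. reflexivity. Qed.
Lemma cpc (w z x y : K) (h : hom w z) (f : hom z x) (g : hom z y) :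
  h >> cpair P f g = cpair P (h >> f) (h >> g).
Proof. apply cext; rewrite ?pr1, ?pr2, ?cas, ?pr1, ?pr2; reflexivity. Qed.
Lemma cpid (x y : K) : cpair P (cpr1 P x y) (cpr2 P x y) = idm _.
Proof. apply cext; rewrite ?pr1, ?pr2, ?cidl; reflexivity. Qed.
Lemma bangu (x : K) (f g : hom x (term P)) : f = g.
Proof. rewrite (bang_uniq HP f), (bang_uniq HP g). reflexivity. Qed.
End CartGen.

Section FunGen.
Variables (K K' : Cat) (F : Functor K K') (HF : IsFunctor F).
Lemma Fid (a : K) : fmap F (idm a) = idm (F a).
Proof. exact (fmap_id HF a). Qed.
Lemma Fc (a b c : K) (f : hom a b) (g : hom b c) : fmap F (f >> g) = fmap F f >> fmap F g.
Proof. exact (fmap_comp HF f g). Qed.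
End FunGen.

Set Implicit Arguments.
Unset Strict Implicit.

Section Comon.
Variable G : LNL.
Local Notation C := (CC G).
Local Notation L := (LL G).
Local Notation "a ⊗ b" := (tens (Lsmc G) a b) (at level 35, right associativity).
Local Notation "f ⊗m g" := (tensm (Lsmc G) f g) (at level 35).
Local Notation al := (assoc (Lsmc G)).
Local Notation ali := (assoc_inv (Lsmc G)).
Local Notation lam' := (lu (Lsmc G)).
Local Notation rho := (ru (Lsmc G)).
Local Notation sg := (sym (Lsmc G)).
Local Notation I := (munit (Lsmc G)).
Local Notation F := (FF G).
Local Notation U := (UU G).
Local Notation P := (Ccart G).
Local Notation "x × y" := (cprod (Ccart G) x y) (at level 34).
Local Notation m := (mm G).
Local Notation mi := (mm_inv G).
Local Notation p1 := (cpr1 P).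
Local Notation p2 := (cpr2 P).

Lemma FFid (a : C) : fmap F (idm a) = idm (F a). Proof. exact (Fid (FF_ok G) a). Qed.
Lemma FFc (a b c : C) (f : hom a b) (g : hom b c) : fmap F (f >> g) = fmap F f >> fmap F g.
Proof. exact (Fc (FF_ok G) f g). Qed.
Lemma UUid (a : L) : fmap U (idm a) = idm (U a). Proof. exact (Fid (UU_ok G) a). Qed.
Lemma UUc (a b c : L) (f : hom a b) (g : hom b c) : fmap U (f >> g) = fmap U f >> fmap U g.
Proof. exact (Fc (UU_ok G) f g). Qed.
Lemma cp1 (z x y : C) (f : hom z x) (g : hom z y) : cpair P f g >> p1 x y = f.
Proof. exact (pr1 (Ccart_ok G) f g). Qed.
Lemma cp2 (z x y : C) (f : hom z x) (g : hom z y) : cpair P f g >> p2 x y = g.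
Proof. exact (pr2 (Ccart_ok G) f g). Qed.
Lemma cex (z x y : C) (h k : hom z (x × y)) :
  h >> p1 x y = k >> p1 x y -> h >> p2 x y = k >> p2 x y -> h = k.
Proof. apply (cext (Ccart_ok G)). Qed.
Lemma cpcC (w z x y : C) (h : hom w z) (f : hom z x) (g : hom z y) :
  h >> cpair P f g = cpair P (h >> f) (h >> g).
Proof. exact (cpc (Ccart_ok G) h f g). Qed.
Lemma pm1 (a a' b b' : C) (f : hom a a') (g : hom b b') : prodm P f g >> p1 a' b' = p1 a b >> f.
Proof. unfold prodm. apply cp1. Qed.
Lemma pm2 (a a' b b' : C) (f : hom a a') (g : hom b b') : prodm P f g >> p2 a' b' = p2 a b >> g.
Proof. unfold prodm. apply cp2. Qed.
Lemma dg1 (x : C) : diag P x >> p1 x x = idm x. Proof. unfold diag. apply cp1. Qed.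
Lemma dg2 (x : C) : diag P x >> p2 x x = idm x. Proof. unfold diag. apply cp2. Qed.

Lemma mK (X Y : C) : m X Y >> mi X Y = idm _. Proof. exact (mm_iso1 X Y). Qed.
Lemma mK' (X Y : C) : mi X Y >> m X Y = idm _. Proof. exact (mm_iso2 X Y). Qed.
Lemma mn (X X' Y Y' : C) (f : hom X X') (g : hom Y Y') :
  (fmap F f ⊗m fmap F g) >> m X' Y' = m X Y >> fmap F (prodm P f g).
Proof. exact (mm_nat f g). Qed.
Lemma mni (X X' Y Y' : C) (f : hom X X') (g : hom Y Y') :
  mi X Y >> (fmap F f ⊗m fmap F g) = fmap F (prodm P f g) >> mi X' Y'.
Proof.
  rewrite <- (cidr (mi X Y >> _)), <- (mK X' Y'). ar. rw (mn f g).
  rewrite <- cas, mK', cidl. reflexivity.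
Qed.

Lemma cXn (X Y : C) (f : hom X Y) : fmap F f >> cX Y = cX X >> (fmap F f ⊗m fmap F f).
Proof.
  unfold cX. ar. rewrite mni. rewrite <- !cas, <- !FFc. f_equal. f_equal.
  apply cex; rewrite ?cas, ?dg1, ?dg2, ?pm1, ?pm2, <- ?cas, ?dg1, ?dg2, ?cidl, ?cidr; reflexivity.
Qed.
Lemma wXn (X Y : C) (f : hom X Y) : fmap F f >> wX Y = wX X.
Proof. unfold wX. rewrite <- cas, <- FFc. f_equal. f_equal. apply (bangu (Ccart_ok G)). Qed.

Lemma mniL (X X' Y : C) (f : hom X X') :
  mi X Y >> (fmap F f ⊗m idm (F Y)) = fmap F (prodm P f (idm Y)) >> mi X' Y.
Proof. rewrite <- mni, FFid. reflexivity. Qed.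
Lemma mniR (X Y Y' : C) (g : hom Y Y') :
  mi X Y >> (idm (F X) ⊗m fmap F g) = fmap F (prodm P (idm X) g) >> mi X Y'.
Proof. rewrite <- mni, FFid. reflexivity. Qed.
Lemma mnL (X X' Y : C) (f : hom X X') :
  (fmap F f ⊗m idm (F Y)) >> m X' Y = m X Y >> fmap F (prodm P f (idm Y)).
Proof. rewrite <- mn, FFid. reflexivity. Qed.
Lemma mnR (X Y Y' : C) (g : hom Y Y') :
  (idm (F X) ⊗m fmap F g) >> m X Y' = m X Y >> fmap F (prodm P (idm X) g).
Proof. rewrite <- mn, FFid. reflexivity. Qed.

Lemma m1K' : m1_inv G >> m1 G = idm _. Proof. exact (m1_iso2 G). Qed.
Lemma m1K : m1 G >> m1_inv G = idm _. Proof. exact (m1_iso1 G). Qed.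

Lemma cul (X : C) : cX X >> ((wX X ⊗m idm (F X)) >> lam' (F X)) = idm (F X).
Proof.
  unfold cX, wX. rewrite <- (mm_lunit X). rewrite tc1. ar.
  rw (tfuse (m1_inv G) (m1 G) (idm (F X)) (idm (F X))). rewrite m1K', cidl, tid, cidl.
  rw (@mniL X _ X (bang P X)). rw (mK' _ _). rewrite cidl.
  rewrite <- !FFc, <- FFid. f_equal. rewrite pm2, cidr. apply dg2.
Qed.

Ltac csimp := repeat first [rw (cp1 _ _) | rw (cp2 _ _) | rw (pm1 _ _) | rw (pm2 _ _) | rw (dg1 _) | rw (dg2 _) | rewrite cidl | rewrite cidr].
Ltac cart := repeat (apply cex); ar; csimp; try reflexivity.

Lemma cur (X : C) : cX X >> ((idm (F X) ⊗m wX X) >> rho (F X)) = idm (F X).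
Proof.
  unfold cX, wX. rewrite <- (mm_runit X). rewrite t1c. ar.
  rw (tfuse (idm (F X)) (idm (F X)) (m1_inv G) (m1 G)). rewrite m1K', cidl, tid, cidl.
  rw (@mniR X X _ (bang P X)). rw (mK' _ _). rewrite cidl.
  rewrite <- !FFc, <- FFid. f_equal. cart.
Qed.

Lemma alm (X Y Z : C) :
  (mi X Y ⊗m idm (F Z)) >> al _ _ _
  = m (X × Y) Z >> (fmap F (cassoc P X Y Z) >> (mi X (Y × Z) >> (idm (F X) ⊗m mi Y Z))).
Proof.
  assert (E : al (F X) (F Y) (F Z) = (m X Y ⊗m idm (F Z)) >> (m (X × Y) Z >> (fmap F (cassoc P X Y Z) >> (mi X (Y × Z) >> (idm (F X) ⊗m mi Y Z))))).
  { pose proof (mm_assoc X Y Z) as H. ar_in H. rw H. rw (mK _ _). rewrite cidl.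
    rewrite tfuse, mK, cidl, tid, cidr. reflexivity. }
  rewrite E. rw (tfuse (mi X Y) (m X Y) (idm (F Z)) (idm (F Z))). rewrite mK', cidl, tid, cidl. reflexivity.
Qed.

Lemma coas (X : C) : cX X >> ((cX X ⊗m idm (F X)) >> al _ _ _) = cX X >> (idm (F X) ⊗m cX X).
Proof.
  unfold cX. rewrite tc1, t1c. ar. rw (alm X X X). rw (@mnL X _ X (diag P X)).
  rw (mK' _ _). rewrite cidl. rw (@mniR X X _ (diag P X)).
  rewrite <- !cas, <- !FFc. f_equal. f_equal. f_equal. unfold cassoc, diag. cart.
Qed.

Lemma kcu (X : C) (A : L) :
  (cX X ⊗m idm A) >> (al _ _ A >> ((wX X ⊗m idm (F X ⊗ A)) >> lam' _)) = idm _.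
Proof.
  rewrite <- tid. rewrite (cut2 (eq_sym (an (wX X) (idm (F X)) (idm A)))). ar. rw (kelly (F X) A).
  rewrite !tfuse. rewrite ?cidl, cul, tid. reflexivity.
Qed.
Lemma kcu2 (X : C) (A : L) :
  (cX X ⊗m idm A) >> (al _ _ A >> (idm (F X) ⊗m ((wX X ⊗m idm A) >> lam' A))) = idm _.
Proof.
  rewrite t1c. rw (eq_sym (an (idm (F X)) (wX X) (idm A))). rw (tri (F X) A).
  rewrite !tfuse, ?cidl, cur, tid. reflexivity.
Qed.

Definition cai (X Y Z : C) : hom (X × (Y × Z)) ((X × Y) × Z) :=
  cpair P (cpair P (p1 _ _) (p2 _ _ >> p1 _ _)) (p2 _ _ >> p2 _ _).

Lemma TA (X Y Z : C) :
  (m X Y ⊗m idm (F Z)) >> (m (X × Y) Z >> fmap F (cassoc P X Y Z))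
  = al _ _ _ >> ((idm (F X) ⊗m m Y Z) >> m X (Y × Z)).
Proof. pose proof (mm_assoc X Y Z) as H. ar_in H. exact H. Qed.

Lemma TAi (X Y Z : C) :
  (idm (F X) ⊗m m Y Z) >> (m X (Y × Z) >> fmap F (cai X Y Z))
  = ali _ _ _ >> ((m X Y ⊗m idm (F Z)) >> m (X × Y) Z).
Proof.
  rewrite <- (cidr (m (X × Y) Z)). rewrite <- (FFid ((X × Y) × Z)).
  assert (E : idm ((X × Y) × Z) = cassoc P X Y Z >> cai X Y Z).
  { unfold cassoc, cai. symmetry. cart. }
  rewrite E, FFc. rw (TA X Y Z). rw (aK' _ _ _). rewrite cidl. reflexivity.
Qed.

Lemma TS (X Y : C) : m X Y >> fmap F (cswap P X Y) = sg _ _ >> m Y X.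
Proof. exact (mm_sym X Y). Qed.


Definition ms (a b : L) : hom ((a ⊗ a) ⊗ (b ⊗ b)) ((a ⊗ b) ⊗ (a ⊗ b)) :=
  al a a (b ⊗ b) >> ((idm a ⊗m ali a b b) >> ((idm a ⊗m (sg a b ⊗m idm b))
    >> ((idm a ⊗m al b a b) >> ali a b (a ⊗ b)))).
Definition msC (X Y : C) : hom ((X × X) × (Y × Y)) ((X × Y) × (X × Y)) :=
  cpair P (cpair P (p1 _ _ >> p1 _ _) (p2 _ _ >> p1 _ _)) (cpair P (p1 _ _ >> p2 _ _) (p2 _ _ >> p2 _ _)).

Lemma TR (X Y : C) :
  ms (F X) (F Y) >> ((m X Y ⊗m m X Y) >> m (X × Y) (X × Y))
  = (m X X ⊗m m Y Y) >> (m _ _ >> fmap F (msC X Y)).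
Proof.
  unfold ms. ar. rewrite (tsplit' (m X Y) (m X Y)). ar.
  rwl (aliR (F X) (F Y) (m X Y)). rwl (TAi X Y (X × Y)).
  rw (tfuse (idm (F X)) (idm (F X)) (al (F Y) (F X) (F Y)) (idm (F Y) ⊗m m X Y)). rewrite cidl.
  rw (tfuse (idm (F X)) (idm (F X)) (al (F Y) (F X) (F Y) >> (idm (F Y) ⊗m m X Y)) (m Y (X × Y))). rewrite cidl.
  ar. rewrite <- (TA Y X Y).
  rw (tfuse (idm (F X)) (idm (F X)) (sg (F X) (F Y) ⊗m idm (F Y)) (m Y X ⊗m idm (F Y) >> (m (Y × X) Y >> fmap F (cassoc P Y X Y)))).
  rewrite cidl. rw (tfuse (sg (F X) (F Y)) (m Y X) (idm (F Y)) (idm (F Y))). rewrite cidl.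
  rewrite <- TS, tc1. ar. rw (@mnL _ _ Y (cswap P X Y)).
  rw (tfuse (idm (F X)) (idm (F X)) (ali (F X) (F Y) (F Y)) _). rewrite cidl.
  rw (eq_sym (TAi X Y Y)).
  rewrite <- !FFc, !t1c. ar.
  rw (alR (F X) (F X) (m Y Y)).
  rw (@mnR X _ _ (cai X Y Y >> (prodm P (cswap P X Y) (idm Y) >> cassoc P Y X Y))).
  rwl (TA X X (Y × Y)).
  rw (eq_sym (tsplit' (m X X) (m Y Y))).
  rewrite <- !FFc. do 3 f_equal. unfold cassoc, cai, msC, cswap, prodm. cart.
Qed.

Lemma mc (X Y : C) :
  m X Y >> cX (X × Y) = (cX X ⊗m cX Y) >> (ms (F X) (F Y) >> (m X Y ⊗m m X Y)).
Proof.
  rewrite <- (cidr (m X Y ⊗m m X Y)), <- (mK (X × Y) (X × Y)). ar.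
  rw (TR X Y). unfold cX. rewrite tcomp. ar.
  rw (tfuse (mi X X) (m X X) (mi Y Y) (m Y Y)). rewrite !mK', tid, cidl.
  rw (mn (diag P X) (diag P Y)). rwl (FFc _ _). do 3 f_equal. unfold msC, diag, prodm. cart.
Qed.

End Comon.

Ltac csimp := repeat first [rw (cp1 _ _) | rw (cp2 _ _) | rw (pm1 _ _) | rw (pm2 _ _) | rw (dg1 _) | rw (dg2 _) | rewrite cidl | rewrite cidr].
Ltac cart := repeat (apply cex); ar; csimp; try reflexivity.

Set Implicit Arguments.
Unset Strict Implicit.

Section LS.
Variable G : LNL.
Local Notation C := (CC G).
Local Notation L := (LL G).
Local Notation "a ⊗ b" := (tens (Lsmc G) a b) (at level 35, right associativity).
Local Notation "f ⊗m g" := (tensm (Lsmc G) f g) (at level 35).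
Local Notation al := (assoc (Lsmc G)).
Local Notation ali := (assoc_inv (Lsmc G)).
Local Notation lam' := (lu (Lsmc G)).
Local Notation rho := (ru (Lsmc G)).
Local Notation sg := (sym (Lsmc G)).
Local Notation I := (munit (Lsmc G)).
Local Notation F := (FF G).
Local Notation U := (UU G).
Local Notation P := (Ccart G).
Local Notation "x × y" := (cprod (Ccart G) x y) (at level 34).
Local Notation m := (mm G).
Local Notation mi := (mm_inv G).
Local Notation p1 := (cpr1 P).
Local Notation p2 := (cpr2 P).

Lemma pair_eq (A B : Type) (a a' : A) (b b' : B) : a = a' -> b = b' -> (a, b) = (a', b').
Proof. intros; subst; reflexivity. Qed.

Lemma kcoas (X : C) (A : L) :
  (cX X ⊗m idm A) >> (al _ _ A >> ((cX X ⊗m idm (F X ⊗ A)) >> al _ _ _))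
  = (cX X ⊗m idm A) >> (al _ _ A >> ((idm (F X) ⊗m (cX X ⊗m idm A)) >> (idm (F X) ⊗m al _ _ A))).
Proof.
  rw (alL (F X) A (cX X)). rw (pent (F X) (F X) (F X) A).
  rw (tfuse (cX X) (cX X ⊗m idm (F X)) (idm A) (idm A)). rewrite cidl.
  rw (tfuse (cX X >> (cX X ⊗m idm (F X))) (al (F X) (F X) (F X)) (idm A) (idm A)). rewrite cidl.
  ar. rewrite coas, tc1. ar. rwl (alM (F X) A (cX X)). reflexivity.
Qed.

Lemma LSassoc (X Y Z W : C) (A B D E : L) (p : LSHom X A Y B) (q : LSHom Y B Z D) (r : LSHom Z D W E) :
  LScomp (LScomp p q) r = LScomp p (LScomp q r).
Proof.
  destruct p as [fp up], q as [fq uq], r as [fr ur]. unfold LScomp; simpl.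
  apply pair_eq. apply cas. ar.
  rewrite (tsplit' (fmap F fp) up). ar.
  rw (tfuse (fmap F fp) (cX Y) (idm B) (idm B)). rewrite cXn, cidl, tc1. ar.
  rwl (tcomm (cX X) up).
  rw (tfuse (idm (F X ⊗ F X)) (fmap F fp ⊗m fmap F fp) up (idm B)). rewrite cidl, cidr.
  rw (an (fmap F fp) (fmap F fp) up).
  rw (tfuse (fmap F fp) (fmap F fq) (fmap F fp ⊗m up) uq).
  rw (kcoas X A). rewrite FFc.
  rewrite (tlr (fmap F fp >> fmap F fq) (cX X ⊗m idm A)).
  rewrite (tlr (fmap F fp >> fmap F fq) (al (F X) (F X) A)).
  rewrite (tsplit' (fmap F fp) up). ar. reflexivity.
Qed.

Lemma sndR (X Y : C) (A B : L) (fp : hom X Y) (up : hom (F X ⊗ A) B) :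
  (cX X ⊗m idm A) >> (al _ _ A >> ((fmap F fp ⊗m up) >> ((wX Y ⊗m idm B) >> lam' B))) = up.
Proof.
  rw (tfuse (fmap F fp) (wX Y) up (idm B)). rewrite wXn, cidr, (tsplit (wX X) up). ar.
  rw (lun up). rw (kcu X A). apply cidl.
Qed.

Lemma LSidl (X Y : C) (A B : L) (q : LSHom X A Y B) : LScomp (LSid X A) q = q.
Proof.
  destruct q as [fq uq]. unfold LScomp, LSid; simpl. apply pair_eq. apply cidl.
  rewrite FFid. ar. rw (kcu2 X A). apply cidl.
Qed.

Lemma LSidr (X Y : C) (A B : L) (p : LSHom X A Y B) : LScomp p (LSid Y B) = p.
Proof.
  destruct p as [fp up]. unfold LScomp, LSid; simpl. apply pair_eq. apply cidr.
  ar. apply sndR.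
Qed.

Lemma liftE (X : C) (A B : L) (g : hom A B) :
  (wX X ⊗m g) >> lam' B = ((wX X ⊗m idm A) >> lam' A) >> g.
Proof. rewrite tsplit. ar. rewrite lun. reflexivity. Qed.

Lemma LSliftr (X Y : C) (A B D : L) (p : LSHom X A Y B) (g : hom B D) :
  LScomp p (lift Y g) = (fst p >> idm Y, snd p >> g).
Proof.
  destruct p as [fp up]. unfold LScomp, lift; simpl. apply pair_eq. reflexivity.
  rewrite liftE. ar. rw (sndR fp up). reflexivity.
Qed.

Lemma LSliftl (X Y : C) (A A' B : L) (g : hom A A') (q : LSHom X A' Y B) :
  LScomp (lift X g) q = (idm X >> fst q, (idm (F X) ⊗m g) >> snd q).
Proof.
  destruct q as [fq uq]. unfold LScomp, lift; simpl. apply pair_eq. reflexivity.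
  rewrite FFid, (tsplit' (wX X) g). ar. rewrite !t1c. ar. rw (alR (F X) (F X) g).
  rw (tcomm (cX X) g). rwl (t1c (F X) (wX X ⊗m idm A') (lam' A')). rw (kcu2 X A'). rewrite cidl. reflexivity.
Qed.

Lemma lift_comp (X : C) (A B D : L) (f : hom A B) (g : hom B D) :
  LScomp (lift X f) (lift X g) = lift X (f >> g).
Proof.
  rewrite LSliftl. unfold lift; simpl. apply pair_eq. apply cidl.
  rw (tfuse (idm (F X)) (wX X) f g). rewrite cidl. reflexivity.
Qed.

Definition tr (a b : L) (e : a = b) : hom a b := match e in _ = b' return hom a b' with eq_refl => idm a end.
Lemma trK (a b : L) (e : a = b) : tr e >> tr (eq_sym e) = idm a.
Proof. destruct e. apply cidl. Qed.
Lemma trK' (a b : L) (e : a = b) : tr (eq_sym e) >> tr e = idm b.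
Proof. destruct e. apply cidl. Qed.

Lemma cast_snd (X Y : C) (A A' B B' : L) (e1 : A = A') (e2 : B = B') (h : LSHom X A Y B) :
  snd (castLS e1 e2 h) = (idm (F X) ⊗m tr (eq_sym e1)) >> (snd h >> tr e2).
Proof. destruct e1, e2. simpl. rewrite tid, cidl, cidr. reflexivity. Qed.
Lemma cast_fst (X Y : C) (A A' B B' : L) (e1 : A = A') (e2 : B = B') (h : LSHom X A Y B) :
  fst (castLS e1 e2 h) = fst h.
Proof. destruct e1, e2. reflexivity. Qed.
Lemma cast_compl (X Y Z : C) (A A' B D : L) (e1 : A = A') (p : LSHom X A Y B) (q : LSHom Y B Z D) :
  LScomp (castLS e1 eq_refl p) q = castLS e1 eq_refl (LScomp p q).
Proof. destruct e1. reflexivity. Qed.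
End LS.

Set Implicit Arguments.
Unset Strict Implicit.

Section GD.
Variable G : LNL.
Local Notation C := (CC G).
Local Notation L := (LL G).
Local Notation "a ⊗ b" := (tens (Lsmc G) a b) (at level 35, right associativity).
Local Notation "f ⊗m g" := (tensm (Lsmc G) f g) (at level 35).
Local Notation al := (assoc (Lsmc G)).
Local Notation ali := (assoc_inv (Lsmc G)).
Local Notation lam' := (lu (Lsmc G)).
Local Notation rho := (ru (Lsmc G)).
Local Notation sg := (sym (Lsmc G)).
Local Notation I := (munit (Lsmc G)).
Local Notation F := (FF G).
Local Notation U := (UU G).
Local Notation P := (Ccart G).
Local Notation "x × y" := (cprod (Ccart G) x y) (at level 34).
Local Notation m := (mm G).
Local Notation mi := (mm_inv G).
Local Notation p1 := (cpr1 P).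
Local Notation p2 := (cpr2 P).

Variables (T : GData G) (HT : IsGDSC T).
Local Notation Q := (Lprod T).
Local Notation "a ⊕ b" := (cprod (Lprod T) a b) (at level 34).
Local Notation q1 := (cpr1 (Lprod T)).
Local Notation q2 := (cpr2 (Lprod T)).
Local Notation Z := (zero (Ladd T)).

Lemma Lq1 (z x y : L) (f : hom z x) (g : hom z y) : cpair Q f g >> q1 x y = f.
Proof. exact (pr1 (Lprod_ok T) f g). Qed.
Lemma Lq2 (z x y : L) (f : hom z x) (g : hom z y) : cpair Q f g >> q2 x y = g.
Proof. exact (pr2 (Lprod_ok T) f g). Qed.
Lemma Lcpc (w z x y : L) (h : hom w z) (f : hom z x) (g : hom z y) :
  h >> cpair Q f g = cpair Q (h >> f) (h >> g).
Proof. exact (cpc (Lprod_ok T) h f g). Qed.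
Lemma z0l (a b c : L) (h : hom b c) : Z a b >> h = Z a c.
Proof. apply (comp_0l (Ladd_ok T)). Qed.
Lemma z0r (a b c : L) (h : hom a b) : h >> Z b c = Z a c.
Proof. apply (comp_0r (Ladd_ok T)). Qed.
Lemma zt0r (a a' b b' : L) (f : hom a a') : f ⊗m Z b b' = Z _ _.
Proof. apply (tensm_0r (Ladd_ok T)). Qed.

Lemma Tc (X Y W : C) (f : hom X Y) (g : hom Y W) : Tmor T (f >> g) = LScomp (Tmor T f) (Tmor T g).
Proof. exact (T_comp HT f g). Qed.

Lemma LSpair_comp (V Z' X Y : C) (E D A B : L) (p : LSHom V E Z' D) (q : LSHom Z' D X A) (r : LSHom Z' D Y B) :
  LScomp p (LSpair T q r) = LSpair T (LScomp p q) (LScomp p r).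
Proof.
  destruct p as [fp up], q as [fq uq], r as [fr ur]. unfold LScomp, LSpair; simpl.
  apply pair_eq. apply cpcC. ar. rewrite !Lcpc. reflexivity.
Qed.

Lemma snd_congr (X Y W W' : C) (A B D : L) (p : LSHom X A Y B) (q : LSHom Y B W D) (q' : LSHom Y B W' D) :
  snd q = snd q' -> snd (LScomp p q) = snd (LScomp p q').
Proof. destruct p, q, q'. simpl. intros ->. reflexivity. Qed.

Lemma phi_inv_fst (X Y : C) : fst (phi_inv T X Y) = idm _.
Proof.
  pose proof (phi_iso1 HT X Y) as H. apply (f_equal fst) in H. simpl in H.
  rewrite (cpid (Ccart_ok G)), cidl in H. exact H.
Qed.

Lemma snd_liftl (X Y : C) (A A' B : L) (g : hom A A') (q : LSHom X A' Y B) :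
  snd (LScomp (lift X g) q) = (idm (F X) ⊗m g) >> snd q.
Proof. rewrite LSliftl. reflexivity. Qed.

Lemma phi_inv_T2 (X Y : C) :
  snd (LScomp (phi_inv T X Y) (Tmor T (p2 X Y))) = snd (lift (X × Y) (q2 (lam T X) (lam T Y))).
Proof.
  transitivity (snd (LScomp (phi_inv T X Y) (LScomp (phi T X Y) (lift (X × Y) (q2 (lam T X) (lam T Y)))))).
  { apply snd_congr. rewrite LSliftr. simpl. rewrite Lq2. reflexivity. }
  rewrite <- LSassoc, (phi_iso2 HT X Y), LSidl. reflexivity.
Qed.
Lemma phi_inv_T1 (X Y : C) :
  snd (LScomp (phi_inv T X Y) (Tmor T (p1 X Y))) = snd (lift (X × Y) (q1 (lam T X) (lam T Y))).
Proof.
  transitivity (snd (LScomp (phi_inv T X Y) (LScomp (phi T X Y) (lift (X × Y) (q1 (lam T X) (lam T Y)))))).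
  { apply snd_congr. rewrite LSliftr. simpl. rewrite Lq1. reflexivity. }
  rewrite <- LSassoc, (phi_iso2 HT X Y), LSidl. reflexivity.
Qed.

Lemma I2 (X Y : C) : snd (LScomp (i2 T X Y) (Tmor T (p2 X Y))) = snd (LSid (X × Y) (lam T Y)).
Proof.
  unfold i2. rewrite LSassoc, snd_liftl, phi_inv_T2. unfold lift, LSid, inj2; simpl.
  rw (tfuse (idm (F (X × Y))) (wX (X × Y)) (cpair Q (Z (lam T Y) (lam T X)) (idm (lam T Y))) (q2 _ _)).
  rewrite cidl, Lq2. reflexivity.
Qed.
Lemma I1 (X Y : C) : snd (LScomp (i2 T X Y) (Tmor T (p1 X Y))) = Z _ _.
Proof.
  unfold i2. rewrite LSassoc, snd_liftl, phi_inv_T1. unfold lift, LSid, inj2; simpl.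
  rw (tfuse (idm (F (X × Y))) (wX (X × Y)) (cpair Q (Z (lam T Y) (lam T X)) (idm (lam T Y))) (q1 _ _)).
  rewrite cidl, Lq1, zt0r, z0l. reflexivity.
Qed.

Lemma snd_comp (X Y W : C) (A B D : L) (p : LSHom X A Y B) (q : LSHom Y B W D) :
  snd (LScomp p q) = (cX X ⊗m idm A) >> (al _ _ A >> ((fmap F (fst p) ⊗m snd p) >> snd q)).
Proof. unfold LScomp. simpl. ar. reflexivity. Qed.
Lemma fst_comp (X Y W : C) (A B D : L) (p : LSHom X A Y B) (q : LSHom Y B W D) :
  fst (LScomp p q) = fst p >> fst q.
Proof. reflexivity. Qed.
Lemma Tmor_fst (X Y : C) (f : hom X Y) : fst (Tmor T f) = f.
Proof. reflexivity. Qed.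
Lemma i2_fst (X Y : C) : fst (i2 T X Y) = idm _.
Proof. unfold i2. rewrite fst_comp, phi_inv_fst. simpl. apply cidl. Qed.

Lemma I3 (X Y X' W V : C) (B : L) (g : hom (X × Y) (X' × W)) (K : LSHom (X' × W) (lam T (X' × W)) V B)
  (H0 : snd (LScomp (i2 T X Y) (Tmor T (g >> p1 X' W))) = Z _ _) :
  snd (LScomp (LScomp (i2 T X Y) (Tmor T g)) K)
  = (cX (X × Y) ⊗m idm _) >> (al _ _ _ >> ((fmap F g ⊗m snd (LScomp (i2 T X Y) (Tmor T (g >> p2 X' W))))
      >> snd (LScomp (i2 T X' W) K))).
Proof.
  assert (E : LScomp (i2 T X Y) (Tmor T g)
     = LScomp (LSpair T (LScomp (i2 T X Y) (Tmor T (g >> p1 X' W))) (LScomp (i2 T X Y) (Tmor T (g >> p2 X' W))))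
              (phi_inv T X' W)).
  { rewrite <- (LSidr (LScomp (i2 T X Y) (Tmor T g))). rewrite <- (phi_iso1 HT X' W).
    rewrite <- LSassoc. f_equal. unfold phi. rewrite !LSassoc, LSpair_comp, <- !Tc, LSpair_comp. reflexivity. }
  rewrite E, LSassoc, snd_comp. unfold LSpair. cbn [fst snd]. rewrite H0, !fst_comp, i2_fst.
  rewrite !Tmor_fst, !cidl, <- cpcC, (cpid (Ccart_ok G)), cidr.
  assert (E2 : cpair Q (Z (F (X × Y) ⊗ lam T Y) (lam T X')) (snd (LScomp (i2 T X Y) (Tmor T (g >> p2 X' W))))
             = snd (LScomp (i2 T X Y) (Tmor T (g >> p2 X' W))) >> inj2 T _ _).
  { unfold inj2. rewrite Lcpc, z0r, cidr. reflexivity. }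
  rewrite E2, trr. ar.
  rewrite <- snd_liftl, <- LSassoc. reflexivity.
Qed.
End GD.

Set Implicit Arguments.
Unset Strict Implicit.

Section Core.
Variable G : LNL.
Local Notation C := (CC G).
Local Notation L := (LL G).
Local Notation "a ⊗ b" := (tens (Lsmc G) a b) (at level 35, right associativity).
Local Notation "f ⊗m g" := (tensm (Lsmc G) f g) (at level 35).
Local Notation al := (assoc (Lsmc G)).
Local Notation ali := (assoc_inv (Lsmc G)).
Local Notation lam' := (lu (Lsmc G)).
Local Notation rho := (ru (Lsmc G)).
Local Notation sg := (sym (Lsmc G)).
Local Notation I := (munit (Lsmc G)).
Local Notation F := (FF G).
Local Notation U := (UU G).
Local Notation P := (Ccart G).
Local Notation "x × y" := (cprod (Ccart G) x y) (at level 34).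
Local Notation m := (mm G).
Local Notation mi := (mm_inv G).
Local Notation p1 := (cpr1 P).
Local Notation p2 := (cpr2 P).

Variables (T : GData G) (HT : IsGDSC T).
Local Notation Z := (zero (Ladd T)).
Local Notation eta := (eta G).
Local Notation e_ A := (lamU T A).

Lemma pmpm (a a' a'' b b' b'' : C) (f : hom a a') (f' : hom a' a'') (g : hom b b') (g' : hom b' b'') :
  prodm P f g >> prodm P f' g' = prodm P (f >> f') (g >> g').
Proof. cart. Qed.

Lemma brace_lin (X : C) (A B : L) (g : hom A B) :
  brace (idm X) ((wX X ⊗m g) >> lam' B) = prodm P (idm X) (fmap U g).
Proof.
  unfold brace. unfold prodm at 2. f_equal.
  rewrite UUc. ar. rw (eq_sym (nn_nat (wX X) g)). unfold wX. rewrite !UUc. ar.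
  rw (pmpm _ _ _ _).
  rewrite <- (cas (eta X) (fmap U (fmap F (bang P X)))), <- (eta_nat (bang P X)), cidl, (eta_mon1 G). ar.
  rewrite <- UUc, m1K, UUid, cidr.
  replace (prodm P (bang P X >> n1 G) (fmap U g)) with (prodm P (bang P X) (fmap U g) >> prodm P (n1 G) (idm (U B))) by cart.
  ar.
  pose proof (nn_lunit B) as H. ar_in H. rewrite H. cart.
Qed.

Lemma tr_refl (a : L) : tr (eq_refl a) = idm a.
Proof. reflexivity. Qed.

Lemma I4 (X : C) (A B : L) (g : hom A B) :
  snd (LScomp (LScomp (i2 T X (U A)) (Tmor T (prodm P (idm X) (fmap U g)))) (Tmor T (p2 X (U B))))
  = (idm _ ⊗m tr (e_ A)) >> (((wX (X × U A) ⊗m g) >> lam' B) >> tr (eq_sym (e_ B))).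
Proof.
  pose proof (t3 HT (idm X) ((wX X ⊗m g) >> lam' B)) as H. rewrite brace_lin in H.
  apply (f_equal (fun q => snd (LScomp q (Tmor T (p2 X (U B)))))) in H. cbv beta in H.
  unfold i2U in H. rewrite LSassoc, !cast_compl, cast_snd, tr_refl, cidr in H.
  assert (E : snd (castLS (e_ B) eq_refl (LScomp (i2 T X (U B)) (Tmor T (p2 X (U B)))))
             = snd (lift (X × U B) (tr (eq_sym (e_ B))))).
  { rewrite cast_snd, (I2 HT), tr_refl, cidr. unfold LSid, lift; simpl.
    rw (tfuse (idm (F (X × U B))) (wX (X × U B)) (tr (eq_sym (e_ B))) (idm _)). rewrite cidl, cidr.
    reflexivity.
  }
  rewrite (snd_congr _ E) in H.
  rewrite LSliftr in H. unfold Wmor in H. cbn [snd] in H.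
  ar_in H. rewrite <- (cas (fmap F (p1 X (U A)) ⊗m idm A)), tfuse, wXn, cidl in H.
  ar. rewrite H. rewrite <- cas, tfuse, cidl, trK, tid, cidl. reflexivity.
Qed.

Definition hh (X : C) (A : L) : hom (X × U A) (U (bangL A)) := p2 X (U A) >> eta (U A).
Definition gg (X : C) (A : L) : hom (X × U A) (X × U (bangL A)) := prodm P (idm X) (eta (U A)).
Definition uu (X : C) (A : L) := snd (LScomp (i2 T X (U A)) (Tmor T (hh X A))).

Lemma H0g (X : C) (A : L) :
  snd (LScomp (i2 T X (U A)) (Tmor T (gg X A >> p1 X (U (bangL A))))) = Z _ _.
Proof. unfold gg. rewrite pm1, cidr. apply (I1 HT). Qed.

Lemma core (X : C) (A : L) :
  uu X A >> (tr (e_ (bangL A)) >> (pcomul A >> tr (eq_sym (e_ (bangL (bangL A))))))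
  = (cX (X × U A) ⊗m idm _) >> (al _ _ _ >> ((fmap F (gg X A) ⊗m uu X A) >> uu X (bangL A))).
Proof.
  assert (E1 : hh X A >> fmap U (pcomul A) = gg X A >> (prodm P (idm X) (fmap U (pcomul A)) >> p2 _ _)).
  { unfold hh, gg. cart. }
  assert (E2 : hh X A >> fmap U (pcomul A) = gg X A >> hh X (bangL A)).
  { unfold hh, gg, pcomul. ar. rw (pm2 _ _). f_equal. symmetry. exact (eta_nat (eta (U A))). }
  transitivity (snd (LScomp (i2 T X (U A)) (Tmor T (hh X A >> fmap U (pcomul A))))).
  { rewrite E1, !(Tc HT), <- LSassoc, (I3 HT _ (H0g X A)), <- LSassoc, I4.
    unfold gg at 2. rewrite pm2. fold (hh X A). fold (uu X A).
    ar. rw (tfuse (fmap F (gg X A)) (idm _) (uu X A) (tr (e_ (bangL A)))). rewrite cidr.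
    rw (tfuse (fmap F (gg X A)) (wX _) (uu X A >> tr (e_ (bangL A))) (pcomul A)). rewrite wXn.
    rw (liftE (X × U A) _). rw (kcu (X × U A) (lam T (U A))). rewrite cidl. reflexivity. }
  rewrite E2, (Tc HT), <- LSassoc, (I3 HT _ (H0g X A)).
  unfold gg at 2. rewrite pm2. fold (hh X A). fold (uu X A). reflexivity.
Qed.

Lemma core' (X : C) (A : L) :
  uu X A >> (tr (e_ (bangL A)) >> pcomul A)
  = (cX (X × U A) ⊗m idm _) >> (al _ _ _ >> ((fmap F (gg X A) ⊗m uu X A) >> (uu X (bangL A) >> tr (e_ (bangL (bangL A)))))).
Proof.
  rewrite <- (cidr (pcomul A)), <- (trK' (e_ (bangL (bangL A)))). ar. rw (core X A). reflexivity.
Qed.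

Lemma dA_eq (X : C) (A : L) :
  snd (scrD T X A) = (idm _ ⊗m tr (eq_sym (e_ A))) >> (uu X A >> tr (e_ (bangL A))).
Proof. unfold scrD. rewrite cast_snd. reflexivity. Qed.

Lemma coreD (X : C) (A : L) :
  snd (scrD T X A) >> pcomul A
  = (cX (X × U A) ⊗m idm A) >> (al _ _ _ >> ((fmap F (gg X A) ⊗m snd (scrD T X A)) >> snd (scrD T X (bangL A)))).
Proof.
  rewrite !dA_eq. ar. rewrite core'.
  rw (tfuse (fmap F (gg X A)) (idm _) _ (tr (eq_sym (e_ (bangL A))))). rewrite cidr. ar.
  rewrite trK, cidr, (tlr (fmap F (gg X A))). ar.
  rw (alR (F (X × U A)) (F (X × U A)) (tr (eq_sym (e_ A)))).
  rw (tcomm (cX (X × U A)) (tr (eq_sym (e_ A)))). reflexivity.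
Qed.
End Core.

Set Implicit Arguments.
Unset Strict Implicit.

Section Fin.
Variable G : LNL.
Local Notation C := (CC G).
Local Notation L := (LL G).
Local Notation "a ⊗ b" := (tens (Lsmc G) a b) (at level 35, right associativity).
Local Notation "f ⊗m g" := (tensm (Lsmc G) f g) (at level 35).
Local Notation al := (assoc (Lsmc G)).
Local Notation ali := (assoc_inv (Lsmc G)).
Local Notation lam' := (lu (Lsmc G)).
Local Notation rho := (ru (Lsmc G)).
Local Notation sg := (sym (Lsmc G)).
Local Notation I := (munit (Lsmc G)).
Local Notation F := (FF G).
Local Notation U := (UU G).
Local Notation P := (Ccart G).
Local Notation "x × y" := (cprod (Ccart G) x y) (at level 34).
Local Notation m := (mm G).
Local Notation mi := (mm_inv G).
Local Notation p1 := (cpr1 P).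
Local Notation p2 := (cpr2 P).


Lemma Smu (X : C) (A B D : L) (d : hom (F (X × U A) ⊗ B) D) :
  LScomp (Sigma d) (mu X A D) = (idm X >> idm X, ali (F X) (bangL A) B >> ((m X (U A) ⊗m idm B) >> d)).
Proof.
  unfold mu. rewrite LSliftr. unfold Sigma. cbn [fst snd]. apply pair_eq; [reflexivity|]. ar.
  rwl (tcomm (wA A) ((m X (U A) ⊗m idm B) >> d)). rw (lun _).
  rwl (tcomm (wA A) (ali (F X) (bangL A) B)). rw (lun _).
  rw (alL (F X) (bangL A ⊗ B) (wA A)). rw (kelly (F X) (bangL A ⊗ B)).
  rw (tfuse (sg (F X) (bangL A)) (wA A ⊗m idm (F X)) (idm (bangL A ⊗ B)) (idm _)).
  rw (tfuse (sg (F X) (bangL A) >> (wA A ⊗m idm (F X))) (lam' (F X)) (idm (bangL A ⊗ B) >> idm _) (idm _)).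
  rewrite !cidl. ar.
  rwl (sn (idm (F X)) (wA A)). rewrite srl. rewrite tll.
  ar.   rwl (aliM (F X) (bangL A ⊗ B) (wA A)). rw (tri' (F X) (bangL A ⊗ B)).
  rwl (t1c (F X) (wA A ⊗m idm (bangL A ⊗ B)) (lam' (bangL A ⊗ B))).
  rwl (t1c (F X) (al (bangL A) (bangL A) B) ((wA A ⊗m idm (bangL A ⊗ B)) >> lam' (bangL A ⊗ B))).
  rwl (t1c (F X) (cA A ⊗m idm B) (al (bangL A) (bangL A) B >> ((wA A ⊗m idm (bangL A ⊗ B)) >> lam' (bangL A ⊗ B)))).
  unfold cA, wA, bangL. rewrite kcu, tid, cidl. reflexivity.
Qed.

Lemma ftl (X : C) (A A' B B' : L) (f : hom A A') (q : LSHom X B X B') :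
  fibtens (lift X f) q = (idm X, ali (F X) A B >> ((sg (F X) A ⊗m idm B) >> (al A (F X) B >> (f ⊗m snd q)))).
Proof.
  unfold fibtens, lift. cbn [snd]. apply pair_eq; [reflexivity|]. ar.
  rewrite tll, (tsplit (lam' A') (snd q)). ar.
  rwl (an' (wX X) f (idm (F X ⊗ B))). rw (kelly' A' (F X ⊗ B)).
  rewrite (tsplit (wX X) (f ⊗m idm (F X ⊗ B))). ar. rw (lun (f ⊗m idm (F X ⊗ B))).
  rwl (tcomm (wX X) (al A (F X) B)).
  rwl (tcomm (wX X) (sg (F X) A ⊗m idm B)).
  rwl (tcomm (wX X) (ali (F X) A B)).
  rw (lun (al A (F X) B)).
  rw (lun (sg (F X) A ⊗m idm B)).
  rw (lun (ali (F X) A B)).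
  rw (kcu X (A ⊗ B)). rewrite cidl. rw (tfuse f (idm A') (idm (F X ⊗ B)) (snd q)). rewrite cidl, cidr.
  reflexivity.
Qed.

Lemma ftid (X : C) (A A' B : L) (f : hom A A') :
  fibtens (lift X f) (LSid X B) = lift X (f ⊗m idm B).
Proof.
  rewrite ftl. unfold lift. apply pair_eq; [reflexivity|]. unfold LSid. cbn [snd].
  rewrite (tsplit' f), t1c. ar. rw (alM A B (wX X)). rw (tri A B).
  rw (tfuse (sg (F X) A) (idm A ⊗m wX X) (idm B) (idm B)).
  rw (tfuse (sg (F X) A >> (idm A ⊗m wX X)) (rho A) (idm B >> idm B) (idm B)).
  rewrite !cidl. ar. rwl (sn (wX X) (idm A)). rewrite slr, tll. ar.
  rwl (an' (wX X) (idm A) (idm B)). rw (kelly' A B). rewrite tid, liftE. ar. reflexivity.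
Qed.

Lemma conjS (x x' a a' b : L) :
  (idm x ⊗m (sg x' a ⊗m idm a')) ⊗m idm b
  = al x ((x' ⊗ a) ⊗ a') b >> ((idm x ⊗m al (x' ⊗ a) a' b) >> ((idm x ⊗m (sg x' a ⊗m idm (a' ⊗ b)))
     >> ((idm x ⊗m ali (a ⊗ x') a' b) >> ali x ((a ⊗ x') ⊗ a') b))).
Proof.
  symmetry. rewrite <- (tid a' b).
  rwl (t1c x (sg x' a ⊗m (idm a' ⊗m idm b)) (ali (a ⊗ x') a' b)).
  rwl (t1c x (al (x' ⊗ a) a' b) (sg x' a ⊗m (idm a' ⊗m idm b) >> ali (a ⊗ x') a' b)).
  rwl (an (sg x' a) (idm a') (idm b)). rewrite aK, cidr.
  rwl (an (idm x) (sg x' a ⊗m idm a') (idm b)). rewrite aK, cidr. reflexivity.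
Qed.

Lemma L1R1 (x x' a a' b : L) :
  ali (x ⊗ x') (a ⊗ a') b >> ((al x x' (a ⊗ a') ⊗m idm b) >> (((idm x ⊗m ali x' a a') ⊗m idm b)
    >> (al x ((x' ⊗ a) ⊗ a') b >> (idm x ⊗m al (x' ⊗ a) a' b))))
  = al x x' ((a ⊗ a') ⊗ b) >> ((idm x ⊗m (idm x' ⊗m al a a' b)) >> (idm x ⊗m ali x' a (a' ⊗ b))).
Proof.
  rw (an (idm x) (ali x' a a') (idm b)). rw (pentL x x' (a ⊗ a') b).
  rwl (t1c x (idm x' ⊗m al a a' b) (ali x' a (a' ⊗ b))). rewrite pentR. rewrite !t1c. ar. reflexivity.
Qed.

Lemma L2R2 (x x' a a' b : L) :
  (idm x ⊗m ali (a ⊗ x') a' b) >> (ali x ((a ⊗ x') ⊗ a') b >> (((idm x ⊗m al a x' a') ⊗m idm b)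
    >> ((ali x a (x' ⊗ a') ⊗m idm b) >> al (x ⊗ a) (x' ⊗ a') b)))
  = (idm x ⊗m al a x' (a' ⊗ b)) >> ((idm x ⊗m (idm a ⊗m ali x' a' b)) >> ali x a ((x' ⊗ a') ⊗ b)).
Proof.
  rwl (aliM x b (al a x' a')). rwl (pentR x a (x' ⊗ a') b).
  rwl (t1c x (al a x' a' ⊗m idm b) (al a (x' ⊗ a') b)).
  rwl (t1c x (ali (a ⊗ x') a' b) (al a x' a' ⊗m idm b >> al a (x' ⊗ a') b)).
  rewrite pentL, t1c. ar. reflexivity.
Qed.

Lemma PLPR (x a b : L) :
  ali (x ⊗ x) (a ⊗ a) b >> ((ms x a ⊗m idm b) >> al (x ⊗ a) (x ⊗ a) b)
  = al x x ((a ⊗ a) ⊗ b) >> ((idm x ⊗m (idm x ⊗m al a a b)) >> ((idm x ⊗m ali x a (a ⊗ b))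
    >> ((idm x ⊗m (sg x a ⊗m idm (a ⊗ b))) >> ((idm x ⊗m al a x (a ⊗ b))
    >> ((idm x ⊗m (idm a ⊗m ali x a b)) >> ali x a ((x ⊗ a) ⊗ b)))))).
Proof.
  unfold ms. rewrite !tc1. ar. rewrite conjS. ar.
  rw (L1R1 x x a a b). rewrite L2R2. reflexivity.
Qed.
End Fin.

Section Final.
Variable G : LNL.
Local Notation C := (CC G).
Local Notation L := (LL G).
Local Notation "a ⊗ b" := (tens (Lsmc G) a b) (at level 35, right associativity).
Local Notation "f ⊗m g" := (tensm (Lsmc G) f g) (at level 35).
Local Notation al := (assoc (Lsmc G)).
Local Notation ali := (assoc_inv (Lsmc G)).
Local Notation lam' := (lu (Lsmc G)).
Local Notation rho := (ru (Lsmc G)).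
Local Notation sg := (sym (Lsmc G)).
Local Notation I := (munit (Lsmc G)).
Local Notation F := (FF G).
Local Notation U := (UU G).
Local Notation P := (Ccart G).
Local Notation "x × y" := (cprod (Ccart G) x y) (at level 34).
Local Notation m := (mm G).
Local Notation mi := (mm_inv G).
Local Notation p1 := (cpr1 P).
Local Notation p2 := (cpr2 P).


Variables (T : GData G) (HT : IsGDSC T).

Lemma mgg (X : CC G) (A : LL G) :
  mm G X (UU G A) >> fmap (FF G) (gg X A) = (idm _ ⊗m pcomul A) >> mm G X (UU G (bangL A)).
Proof. unfold gg, pcomul. exact (eq_sym (mnR X _)). Qed.

Theorem main (X : C) (A : L) :
  LScomp (deriv T X A) (pX X A)
  = LScomp
      (LScomp
         (LScomp (fibtens (cXA X A) (LSid X A))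
                 (lift X (assoc (Lsmc G) (bangL A) (bangL A) A)))
         (fibtens (pX X A) (deriv T X A)))
      (deriv T X (bangL A)).
Proof.
  unfold pX, cXA. rewrite ftid, lift_comp, ftl, LSliftl.
  unfold deriv. rewrite !Smu, LSliftr.
  unfold LScomp. cbn [fst snd]. apply pair_eq.
  { rewrite !cidl. reflexivity. }
  rewrite !cidl, FFid. ar. rw (coreD HT X A).
  rw (tfuse (m X (U A)) (cX (X × U A)) (idm A) (idm A)). rewrite cidl, mc, !tll. ar.
  rw (an (m X (U A)) (m X (U A)) (idm A)).
  rw (tfuse (m X (U A)) (fmap F (gg X A)) (m X (U A) ⊗m idm A) (snd (scrD T X A))).
  rewrite mgg, tlrr. ar.
  rwl (an' (cX X) (cX (U A)) (idm A)).
  rw (PLPR (F X) (F (U A)) A).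
  rewrite (tlr (pcomul A) (ali (F X) (bangL A) A)), !t1c. ar.
  rw (an' (idm (F X)) (pcomul A) ((m X (U A) ⊗m idm A) >> snd (scrD T X A))).
  rw (alR (F X) (F X) (cA A ⊗m idm A)).
  rw (tfuse (cX X) (idm (F X ⊗ F X)) (idm (bangL A ⊗ A)) (cA A ⊗m idm A)). rewrite cidl, cidr.
  unfold cA, bangL. reflexivity.
Qed.
End Final.

Unset Implicit Arguments.
Set Strict Implicit.

Theorem proposition4p32 (G : LNL) (T : GData G) (HT : IsGDSC T)
  (X : CC G) (A : LL G) :
  LScomp (deriv T X A) (pX X A)
  = LScomp
      (LScomp
         (LScomp (fibtens (cXA X A) (LSid X A))
                 (lift X (assoc (Lsmc G) (bangL A) (bangL A) A)))
         (fibtens (pX X A) (deriv T X A)))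
      (deriv T X (bangL A)).
Proof.
  exact (main HT X A).
Qed.
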